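(* Let $F$ be a $C^1$-closed smooth curve in the Euclidean plane parametrized by arc length $t\in[0,T]$ with signed curvature $k(t)$, and let $G\subset H^2$ be its development, i.e. a curve in the hyperbolic plane parametrized by arc length $t\in[0,T]$ whose signed geodesic curvature is $k(t)$. Then $G$ is $C^1$-closed if and only if the bicycle monodromy $M_F$ for the bicycle of length $\ell=1$ is the identity.
   Context: A differentiable curve is $C^1$-closed if its endpoints coincide and its oriented tangent lines at the endpoints coincide. The development $G$ is unique up to orientation-preserving isometry of $H^2$ (the hyperbolic plane of curvature $-1$). Bicycle model: a segment $RF$ of fixed length $\ell$ moves in the plane with the velocity of the rear end $R$ always parallel to $RF$; the bicycle monodromy $M_F$ is the self-map of the circle of radius $\ell$ sending the initial position of $R$ relative to the front end (moving along $F$) to its terminal position. *)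

(* Defs.v *)
From Stdlib Require Import Reals.
From Coquelicot Require Import Coquelicot.
Open Scope R_scope.

Definition smooth_fun (f : R -> R) : Prop := forall n x, ex_derive_n f n x.
Definition C2_fun (f : R -> R) : Prop :=
  forall x, ex_derive f x /\ ex_derive_n f 2 x.
Definition C1_fun (f : R -> R) : Prop := forall x, ex_derive f x.

Definition vec2 := (R * R)%type.
Definition sub2 (p q : vec2) : vec2 := (fst p - fst q, snd p - snd q).
Definition scal2 (c : R) (p : vec2) : vec2 := (c * fst p, c * snd p).
Definition dot2 (p q : vec2) : R := fst p * fst q + snd p * snd q.
Definition det2 (p q : vec2) : R := fst p * snd q - snd p * fst q.

Definition smooth_curve2 (F : R -> vec2) : Prop :=
  smooth_fun (fun s => fst (F s)) /\ smooth_fun (fun s => snd (F s)).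
Definition C1_curve2 (F : R -> vec2) : Prop :=
  C1_fun (fun s => fst (F s)) /\ C1_fun (fun s => snd (F s)).

Definition vel2 (F : R -> vec2) (t : R) : vec2 :=
  (Derive (fun s => fst (F s)) t, Derive (fun s => snd (F s)) t).
Definition acc2 (F : R -> vec2) (t : R) : vec2 :=
  (Derive_n (fun s => fst (F s)) 2 t, Derive_n (fun s => snd (F s)) 2 t).

Definition arclength2 (F : R -> vec2) (T : R) : Prop :=
  forall t, 0 <= t <= T -> dot2 (vel2 F t) (vel2 F t) = 1.

Definition curv2 (F : R -> vec2) (t : R) : R := det2 (vel2 F t) (acc2 F t).

(* C^1-closed on [0,T]: endpoints coincide and the oriented tangent lines
   coincide (same point, tangent vectors positively proportional). *)
Definition C1_closed2 (F : R -> vec2) (T : R) : Prop :=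
  F 0 = F T /\ exists c, 0 < c /\ vel2 F T = scal2 c (vel2 F 0).

(** * Hyperbolic plane H^2: hyperboloid model in Minkowski space R^{2,1} *)
Definition vec3 := (R * R * R)%type.
Definition c1 (p : vec3) : R := fst (fst p).
Definition c2 (p : vec3) : R := snd (fst p).
Definition c3 (p : vec3) : R := snd p.
Definition add3 (p q : vec3) : vec3 := ((c1 p + c1 q, c2 p + c2 q), c3 p + c3 q).
Definition scal3 (c : R) (p : vec3) : vec3 := ((c * c1 p, c * c2 p), c * c3 p).
Definition mink (p q : vec3) : R := c1 p * c1 q + c2 p * c2 q - c3 p * c3 q.
Definition in_H2 (p : vec3) : Prop := mink p p = -1 /\ 0 < c3 p.
(* Lorentzian cross product: p ⊠ q = J (p × q), J = diag(1,1,-1);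
   it satisfies mink (p ⊠ q) r = det(p,q,r). *)
Definition lcross (p q : vec3) : vec3 :=
  ((c2 p * c3 q - c3 p * c2 q, c3 p * c1 q - c1 p * c3 q),
   - (c1 p * c2 q - c2 p * c1 q)).

Definition C2_curve3 (G : R -> vec3) : Prop :=
  C2_fun (fun s => c1 (G s)) /\ C2_fun (fun s => c2 (G s)) /\
  C2_fun (fun s => c3 (G s)).

Definition vel3 (G : R -> vec3) (t : R) : vec3 :=
  ((Derive (fun s => c1 (G s)) t, Derive (fun s => c2 (G s)) t),
   Derive (fun s => c3 (G s)) t).
Definition acc3 (G : R -> vec3) (t : R) : vec3 :=
  ((Derive_n (fun s => c1 (G s)) 2 t, Derive_n (fun s => c2 (G s)) 2 t),
   Derive_n (fun s => c3 (G s)) 2 t).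

Definition H2_arclength (G : R -> vec3) (T : R) : Prop :=
  forall t, 0 <= t <= T -> in_H2 (G t) /\ mink (vel3 G t) (vel3 G t) = 1.

(* covariant acceleration: tangential projection of G'' onto T_{G(t)} H^2,
   v |-> v + <v,G> G *)
Definition cov_acc3 (G : R -> vec3) (t : R) : vec3 :=
  add3 (acc3 G t) (scal3 (mink (acc3 G t) (G t)) (G t)).
(* oriented unit normal N = G ⊠ G' in T_{G(t)} H^2 *)
Definition normal3 (G : R -> vec3) (t : R) : vec3 := lcross (G t) (vel3 G t).
Definition geod_curv (G : R -> vec3) (t : R) : R :=
  mink (cov_acc3 G t) (normal3 G t).

Definition C1_closed3 (G : R -> vec3) (T : R) : Prop :=
  G 0 = G T /\ exists c, 0 < c /\ vel3 G T = scal3 c (vel3 G 0).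

Definition bicycle_path (F : R -> vec2) (ell T : R) (Rr : R -> vec2) : Prop :=
  C1_curve2 Rr /\
  forall t, 0 <= t <= T ->
    dot2 (sub2 (F t) (Rr t)) (sub2 (F t) (Rr t)) = ell ^ 2 /\
    det2 (vel2 Rr t) (sub2 (F t) (Rr t)) = 0.

(* graph of the monodromy M_F : x |-> y, where x (resp. y) is the initial
   (resp. terminal) position of the rear end relative to the front end *)
Definition monodromy (F : R -> vec2) (ell T : R) (x y : vec2) : Prop :=
  exists Rr, bicycle_path F ell T Rr /\
    sub2 (Rr 0) (F 0) = x /\ sub2 (Rr T) (F T) = y.

Definition on_circle (ell : R) (x : vec2) : Prop := dot2 x x = ell ^ 2.

Definition monodromy_is_id (F : R -> vec2) (ell T : R) : Prop :=
  forall x y, on_circle ell x -> (monodromy F ell T x y <-> y = x).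

(* Main.v *)
Require Import Defs.
From Stdlib Require Import Reals.
From Coquelicot Require Import Coquelicot.
Open Scope R_scope.
From Stdlib Require Import Lra Psatz.
Import Defs.

Lemma v3ext (u v : vec3) : c1 u = c1 v -> c2 u = c2 v -> c3 u = c3 v -> u = v.
Proof. destruct u as [[u1 u2] u3]; destruct v as [[v1 v2] v3]; unfold c1,c2,c3; simpl; intros; subst; reflexivity. Qed.
Lemma v2ext (u v : vec2) : fst u = fst v -> snd u = snd v -> u = v.
Proof. destruct u as [u1 u2]; destruct v as [v1 v2]; simpl; intros; subst; reflexivity. Qed.

Definition J2 (p : vec2) : vec2 := (- snd p, fst p).
Definition add2 (p q : vec2) : vec2 := (fst p + fst q, snd p + snd q).

Lemma dplus (f g : R -> R) (x a b : R) : is_derive f x a -> is_derive g x b -> is_derive (fun s => f s + g s) x (a + b).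
Proof. intros; now apply (is_derive_plus f g). Qed.
Lemma dminus (f g : R -> R) (x a b : R) : is_derive f x a -> is_derive g x b -> is_derive (fun s => f s - g s) x (a - b).
Proof. intros; now apply (is_derive_minus f g). Qed.
Lemma dmult (f g : R -> R) (x a b : R) : is_derive f x a -> is_derive g x b -> is_derive (fun s => f s * g s) x (a * g x + f x * b).
Proof. intros; apply (is_derive_mult f g); auto. intros; apply Rmult_comm. Qed.
Lemma dopp (f : R -> R) (x a : R) : is_derive f x a -> is_derive (fun s => - f s) x (- a).
Proof. intros; now apply (is_derive_opp f). Qed.
Lemma dconst (c x : R) : is_derive (fun _ => c) x 0.
Proof. apply (is_derive_const c x). Qed.
Lemma deq (f : R -> R) (x a b : R) : is_derive f x a -> a = b -> is_derive f x b.
Proof. intros; subst; auto. Qed.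

Ltac dtac1 := match goal with
 | |- is_derive (fun s => _ + _) _ _ => apply dplus
 | |- is_derive (fun s => _ - _) _ _ => apply dminus
 | |- is_derive (fun s => _ * _) _ _ => apply dmult
 | |- is_derive (fun s => Ropp _) _ _ => apply dopp
 | H : is_derive ?f ?x _ |- is_derive ?f ?x _ => exact H
 | |- is_derive _ _ _ => apply dconst end.
Ltac dtac := repeat dtac1.

Definition D3 (u : R -> vec3) (t : R) (w : vec3) : Prop :=
  is_derive (fun s => c1 (u s)) t (c1 w) /\ is_derive (fun s => c2 (u s)) t (c2 w) /\
  is_derive (fun s => c3 (u s)) t (c3 w).
Definition D2 (u : R -> vec2) (t : R) (w : vec2) : Prop :=
  is_derive (fun s => fst (u s)) t (fst w) /\ is_derive (fun s => snd (u s)) t (snd w).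

Ltac d3split := repeat match goal with H : D3 _ _ _ |- _ => destruct H as [? [? ?]] | H : D2 _ _ _ |- _ => destruct H end.
Ltac prep := unfold D3, D2, add3, scal3, lcross, mink, add2, sub2, scal2, J2, dot2, det2 in *; unfold c1, c2, c3 in *; cbn [fst snd] in *.
Ltac dfin := eapply deq; [dtac | cbv beta; ring].
Ltac d3g := intros; d3split; prep; refine (conj _ (conj _ _)); dfin.
Ltac d2g := intros; d3split; prep; split; dfin.

Lemma D3_add u w t du dw : D3 u t du -> D3 w t dw -> D3 (fun s => add3 (u s) (w s)) t (add3 du dw).
Proof. d3g. Qed.
Lemma D3_scal (f : R -> R) u t df du : is_derive f t df -> D3 u t du ->
  D3 (fun s => scal3 (f s) (u s)) t (add3 (scal3 df (u t)) (scal3 (f t) du)).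
Proof. d3g. Qed.
Lemma D3_lcross u w t du dw : D3 u t du -> D3 w t dw ->
  D3 (fun s => lcross (u s) (w s)) t (add3 (lcross du (w t)) (lcross (u t) dw)).
Proof. d3g. Qed.
Lemma D3_const (v : vec3) t : D3 (fun _ => v) t ((0,0),0).
Proof. refine (conj _ (conj _ _)); apply dconst. Qed.
Lemma D_mink u w t du dw : D3 u t du -> D3 w t dw ->
  is_derive (fun s => mink (u s) (w s)) t (mink du (w t) + mink (u t) dw).
Proof. intros; d3split; prep; dfin. Qed.

Lemma D2_add u w t du dw : D2 u t du -> D2 w t dw -> D2 (fun s => add2 (u s) (w s)) t (add2 du dw).
Proof. d2g. Qed.
Lemma D2_sub u w t du dw : D2 u t du -> D2 w t dw -> D2 (fun s => sub2 (u s) (w s)) t (sub2 du dw).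
Proof. d2g. Qed.
Lemma D2_scal (f : R -> R) u t df du : is_derive f t df -> D2 u t du ->
  D2 (fun s => scal2 (f s) (u s)) t (add2 (scal2 df (u t)) (scal2 (f t) du)).
Proof. d2g. Qed.
Lemma D2_J u t du : D2 u t du -> D2 (fun s => J2 (u s)) t (J2 du).
Proof. d2g. Qed.
Lemma D_dot u w t du dw : D2 u t du -> D2 w t dw ->
  is_derive (fun s => dot2 (u s) (w s)) t (dot2 du (w t) + dot2 (u t) dw).
Proof. intros; d3split; prep; dfin. Qed.
Lemma D_det u w t du dw : D2 u t du -> D2 w t dw ->
  is_derive (fun s => det2 (u s) (w s)) t (det2 du (w t) + det2 (u t) dw).
Proof. intros; d3split; prep; dfin. Qed.


Ltac v3 := repeat match goal with p : vec3 |- _ => destruct p as [[? ?] ?] end;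
  apply v3ext; unfold scal3, add3, mink, lcross, c1, c2, c3; cbn [fst snd]; ring.

Lemma cramer (a b c w : vec3) :
  scal3 (mink (lcross a b) c) w =
  add3 (scal3 (mink w a) (lcross b c)) (add3 (scal3 (mink w b) (lcross c a)) (scal3 (mink w c) (lcross a b))).
Proof. v3. Qed.
Lemma bac (p q : vec3) : lcross p (lcross p q) = add3 (scal3 (mink p p) q) (scal3 (- mink p q) p).
Proof. v3. Qed.
Lemma bac_b (p q : vec3) : lcross q (lcross p q) = add3 (scal3 (- mink q q) p) (scal3 (mink q p) q).
Proof. v3. Qed.
Lemma bac_c (p q : vec3) : lcross (lcross p q) p = add3 (scal3 (- mink p p) q) (scal3 (mink p q) p).
Proof. v3. Qed.
Lemma lag (p q : vec3) : mink (lcross p q) (lcross p q) = mink p q ^2 - mink p p * mink q q.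
Proof. destruct p as [[? ?] ?]; destruct q as [[? ?] ?]; unfold mink, lcross, c1, c2, c3; cbn [fst snd]; ring. Qed.
Lemma mink_sym p q : mink p q = mink q p.
Proof. unfold mink; ring. Qed.
Lemma trip1 p q : mink p (lcross p q) = 0.
Proof. destruct p as [[? ?] ?]; destruct q as [[? ?] ?]; unfold mink, lcross, c1, c2, c3; cbn [fst snd]; ring. Qed.
Lemma trip2 p q : mink q (lcross p q) = 0.
Proof. destruct p as [[? ?] ?]; destruct q as [[? ?] ?]; unfold mink, lcross, c1, c2, c3; cbn [fst snd]; ring. Qed.
Lemma lcross_self p : lcross p p = ((0,0),0).
Proof. v3. Qed.

Definition frame (g v : vec3) := mink g g = -1 /\ mink v v = 1 /\ mink g v = 0.

Lemma frameNN g v : frame g v -> mink (lcross g v) (lcross g v) = 1.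
Proof. intros [h1 [h2 h3]]; rewrite lag, h1, h2, h3; ring. Qed.

Ltac v3e C := apply v3ext;
  [apply (f_equal c1) in C | apply (f_equal c2) in C | apply (f_equal c3) in C];
  unfold scal3, add3, mink, lcross, c1, c2, c3 in *; cbn [fst snd] in *; lra.

Lemma decomp g v w : frame g v ->
  w = add3 (scal3 (- mink w g) g) (add3 (scal3 (mink w v) v) (scal3 (mink w (lcross g v)) (lcross g v))).
Proof.
intros Hf. pose proof (cramer g v (lcross g v) w) as C.
rewrite (frameNN _ _ Hf), bac_b, bac_c in C. destruct Hf as [h1 [h2 h3]].
rewrite h1, h2, h3, (mink_sym v g), h3 in C.
destruct g as [[? ?] ?]; destruct v as [[? ?] ?]; destruct w as [[? ?] ?].
v3e C.
Qed.

Lemma deriv0_on (f : R -> R) T c t l : 0 < T -> 0 <= t <= T ->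
  (forall s, 0 <= s <= T -> f s = c) -> is_derive f t l -> l = 0.
Proof.
intros HT Ht Hc Hd. apply is_derive_Reals in Hd.
destruct (Req_dec l 0) as [|Hl]; auto. exfalso.
destruct (Hd (Rabs l) (Rabs_pos_lt _ Hl)) as [del Hdel].
pose proof (cond_pos del) as Hdp.
destruct (Rlt_le_dec t T) as [Hlt|Hge].
- set (h := Rmin (del/2) (T - t)).
  assert (Hh0 : 0 < h) by (unfold h; apply Rmin_glb_lt; lra).
  assert (Hh1 : h <= del/2) by apply Rmin_l.
  assert (Hh2 : h <= T - t) by apply Rmin_r.
  specialize (Hdel h ltac:(lra) ltac:(rewrite Rabs_pos_eq; lra)).
  rewrite (Hc (t+h)) in Hdel by lra. rewrite (Hc t) in Hdel by lra.
  replace ((c - c)/h - l) with (- l) in Hdel by (field; lra).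
  rewrite Rabs_Ropp in Hdel; lra.
- set (h := - Rmin (del/2) T).
  assert (Hh0 : 0 < - h) by (unfold h; rewrite Ropp_involutive; apply Rmin_glb_lt; lra).
  assert (Hh1 : - h <= del/2) by (unfold h; rewrite Ropp_involutive; apply Rmin_l).
  assert (Hh2 : - h <= T) by (unfold h; rewrite Ropp_involutive; apply Rmin_r).
  specialize (Hdel h ltac:(lra) ltac:(rewrite Rabs_left; lra)).
  rewrite (Hc (t+h)) in Hdel by lra. rewrite (Hc t) in Hdel by lra.
  replace ((c - c)/h - l) with (- l) in Hdel by (field; lra).
  rewrite Rabs_Ropp in Hdel; lra.
Qed.

Lemma const_on (f : R -> R) T : 0 < T -> (forall s, 0 <= s <= T -> is_derive f s 0) -> f T = f 0.
Proof.
intros HT Hd.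
destruct (MVT_gen f 0 T (fun _ => 0)) as [c [_ Hc]].
- intros x Hx. apply Hd. rewrite Rmin_left, Rmax_right in Hx by lra. lra.
- intros x Hx. rewrite Rmin_left, Rmax_right in Hx by lra.
  apply derivable_continuous_pt. exists 0. apply is_derive_Reals. apply Hd; lra.
- lra.
Qed.

Lemma null_future n g : mink n n = 0 -> mink n g = -1 -> in_H2 g -> 0 < c3 n.
Proof.
destruct n as [[n1 n2] n3]; destruct g as [[g1 g2] g3]; unfold in_H2, mink, c1, c2, c3; cbn [fst snd].
intros h1 h2 [h3 h4].
destruct (Rle_lt_dec n3 0) as [Hn|Hn]; auto. exfalso.
assert (L : (n1*g1+n2*g2)^2 + (n1*g2-n2*g1)^2 = (n1*n1+n2*n2)*(g1*g1+g2*g2)) by ring.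
replace (n1*n1+n2*n2) with (n3*n3) in L by lra.
replace (g1*g1+g2*g2) with (g3*g3-1) in L by lra.
replace (n1*g1+n2*g2) with (n3*g3-1) in L by lra.
assert (0 <= (n1*g2 - n2*g1)^2) by apply pow2_ge_0.
assert (n3*g3 <= 0) by nra.
nra.
Qed.

Lemma null_neg n g : mink n n = 0 -> 0 < c3 n -> in_H2 g -> mink n g < 0.
Proof.
destruct n as [[n1 n2] n3]; destruct g as [[g1 g2] g3]; unfold in_H2, mink, c1, c2, c3; cbn [fst snd].
intros h1 h2 [h3 h4].
assert (L : (n1*g1+n2*g2)^2 + (n1*g2-n2*g1)^2 = (n1*n1+n2*n2)*(g1*g1+g2*g2)) by ring.
replace (n1*n1+n2*n2) with (n3*n3) in L by lra.
replace (g1*g1+g2*g2) with (g3*g3-1) in L by lra.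
assert (0 <= (n1*g2 - n2*g1)^2) by apply pow2_ge_0.
destruct (Rlt_le_dec (n1 * g1 + n2 * g2 - n3 * g3) 0) as [Hq|Hq]; auto. exfalso.
assert (n3*g3 <= n1*g1+n2*g2) by lra.
assert (0 < n3*g3) by nra.
assert ((n3*g3)^2 <= (n1*g1+n2*g2)^2) by nra.
nra.
Qed.


Lemma G_D (G : R -> vec3) : C2_curve3 G -> forall t, D3 G t (vel3 G t) /\ D3 (vel3 G) t (acc3 G t).
Proof.
intros [h1 [h2 h3]] t. destruct (h1 t) as [a1 b1]; destruct (h2 t) as [a2 b2]; destruct (h3 t) as [a3 b3].
split; refine (conj _ (conj _ _)); apply Derive_correct; assumption.
Qed.

Lemma F_D (F : R -> vec2) : smooth_curve2 F -> forall t, D2 F t (vel2 F t) /\ D2 (vel2 F) t (acc2 F t).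
Proof.
intros [h1 h2] t.
split; split; apply Derive_correct; [apply (h1 1%nat t) | apply (h2 1%nat t) | apply (h1 2%nat t) | apply (h2 2%nat t)].
Qed.

Lemma Rr_D (Rr : R -> vec2) : C1_curve2 Rr -> forall t, D2 Rr t (vel2 Rr t).
Proof. intros [h1 h2] t; split; apply Derive_correct; auto. Qed.

Lemma mink_al p c q r : mink (add3 p (scal3 c q)) r = mink p r + c * mink q r.
Proof. unfold mink, add3, scal3, c1, c2, c3; cbn [fst snd]; ring. Qed.

Lemma G_gv T G : 0 < T -> C2_curve3 G -> H2_arclength G T -> forall t, 0 <= t <= T ->
  mink (G t) (vel3 G t) = 0.
Proof.
intros HT HC HA t Ht.
destruct (G_D G HC t) as [d1 _].
pose proof (D_mink _ _ _ _ _ d1 d1) as D.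
assert (E := deriv0_on _ T (-1) t _ HT Ht (fun s Hs => proj1 (proj1 (HA s Hs))) D).
rewrite (mink_sym (vel3 G t)) in E. lra.
Qed.

Lemma G_frame T G : 0 < T -> C2_curve3 G -> H2_arclength G T -> forall t, 0 <= t <= T ->
  frame (G t) (vel3 G t) /\ mink (G t) (acc3 G t) = -1 /\ mink (vel3 G t) (acc3 G t) = 0.
Proof.
intros HT HC HA t Ht.
destruct (G_D G HC t) as [d1 d2].
assert (gv := G_gv T G HT HC HA t Ht).
destruct (HA t Ht) as [[gg _] vv].
split; [split; [|split]; auto|].
split.
- pose proof (D_mink _ _ _ _ _ d1 d2) as D.
  assert (E := deriv0_on _ T 0 t _ HT Ht (fun s Hs => G_gv T G HT HC HA s Hs) D).
  rewrite vv in E. lra.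
- pose proof (D_mink _ _ _ _ _ d2 d2) as D.
  assert (E := deriv0_on _ T 1 t _ HT Ht (fun s Hs => proj2 (HA s Hs)) D).
  rewrite (mink_sym (acc3 G t)) in E. lra.
Qed.

Lemma G_acc T G : 0 < T -> C2_curve3 G -> H2_arclength G T -> forall t, 0 <= t <= T ->
  acc3 G t = add3 (G t) (scal3 (geod_curv G t) (normal3 G t)).
Proof.
intros HT HC HA t Ht.
destruct (G_frame T G HT HC HA t Ht) as [Hf [ga va]].
assert (K : geod_curv G t = mink (acc3 G t) (normal3 G t)).
{ unfold geod_curv, cov_acc3. rewrite mink_al. unfold normal3. rewrite trip1. ring. }
rewrite K. unfold normal3.
pose proof (decomp _ _ (acc3 G t) Hf) as Dc.
rewrite (mink_sym (acc3 G t) (G t)), ga, (mink_sym (acc3 G t) (vel3 G t)), va in Dc.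
rewrite Dc at 1.
set (k := mink (acc3 G t) (lcross (G t) (vel3 G t))). clearbody k.
v3.
Qed.

Lemma G_N T G : 0 < T -> C2_curve3 G -> H2_arclength G T -> forall t, 0 <= t <= T ->
  add3 (lcross (vel3 G t) (vel3 G t)) (lcross (G t) (acc3 G t)) = scal3 (- geod_curv G t) (vel3 G t).
Proof.
intros HT HC HA t Ht.
destruct (G_frame T G HT HC HA t Ht) as [Hf _].
rewrite (G_acc T G HT HC HA t Ht).
unfold normal3.
set (k := geod_curv G t). clearbody k.
set (g := G t) in *. set (v := vel3 G t) in *. clearbody g v.
assert (E : add3 (lcross v v) (lcross g (add3 g (scal3 k (lcross g v)))) =
            scal3 k (lcross g (lcross g v))) by v3.
rewrite E, bac. destruct Hf as [h1 [h2 h3]]. rewrite h1, h3. v3.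
Qed.

Lemma F_facts T F : 0 < T -> smooth_curve2 F -> arclength2 F T -> forall t, 0 <= t <= T ->
  dot2 (vel2 F t) (vel2 F t) = 1 /\ acc2 F t = scal2 (curv2 F t) (J2 (vel2 F t)).
Proof.
intros HT HS HA t Ht.
destruct (F_D F HS t) as [_ d2].
pose proof (D_dot _ _ _ _ _ d2 d2) as D.
assert (E := deriv0_on _ T 1 t _ HT Ht (fun s Hs => HA s Hs) D).
split; [apply HA; auto|].
unfold curv2. pose proof (HA t Ht) as pp.
set (p := vel2 F t) in *. set (q := acc2 F t) in *. clearbody p q.
destruct p as [p1 p2]; destruct q as [q1 q2].
unfold dot2, det2, scal2, J2 in *; cbn [fst snd] in *.
assert (pq : q1*p1 + q2*p2 = 0) by lra.
apply v2ext; cbn [fst snd].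
- assert (X : q1 - (p1 * q2 - p2 * q1) * - p2 = q1 * (1 - (p1*p1+p2*p2)) + p1 * (q1*p1+q2*p2)) by ring.
  rewrite pp, pq in X. lra.
- assert (X : q2 - (p1 * q2 - p2 * q1) * p1 = q2 * (1 - (p1*p1+p2*p2)) + p2 * (q1*p1+q2*p2)) by ring.
  rewrite pp, pq in X. lra.
Qed.


Definition Xf (Rr F : R -> vec2) s := sub2 (Rr s) (F s).
Definition af (Rr F : R -> vec2) s := dot2 (Xf Rr F s) (vel2 F s).
Definition bf (Rr F : R -> vec2) s := dot2 (Xf Rr F s) (J2 (vel2 F s)).
Definition nvec (G : R -> vec3) (a b : R) s :=
  add3 (G s) (add3 (scal3 a (vel3 G s)) (scal3 b (normal3 G s))).
Definition nf (G : R -> vec3) (Rr F : R -> vec2) s := nvec G (af Rr F s) (bf Rr F s) s.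

Lemma D3_eq u t w w' : D3 u t w -> w = w' -> D3 u t w'.
Proof. intros; subst; auto. Qed.

Lemma dot_sub_l u p : dot2 (sub2 u p) p = dot2 u p - dot2 p p.
Proof. unfold dot2, sub2; cbn [fst snd]; ring. Qed.

Lemma bike_facts T F Rr : 0 < T -> smooth_curve2 F -> bicycle_path F 1 T Rr -> forall t, 0 <= t <= T ->
  dot2 (Xf Rr F t) (Xf Rr F t) = 1 /\ vel2 Rr t = scal2 (af Rr F t) (Xf Rr F t).
Proof.
intros HT HS [HC HB] t Ht.
assert (XX : forall s, 0 <= s <= T -> dot2 (Xf Rr F s) (Xf Rr F s) = 1).
{ intros s Hs. destruct (HB s Hs) as [h _]. unfold Xf. transitivity (1^2); [|ring]. rewrite <- h.
  unfold dot2, sub2; cbn [fst snd]; ring. }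
split; [auto|].
destruct (F_D F HS t) as [dF _]. pose proof (Rr_D Rr HC t) as dR.
pose proof (D2_sub _ _ _ _ _ dR dF) as dX.
pose proof (D_dot _ _ _ _ _ dX dX) as D.
assert (E := deriv0_on _ T 1 t _ HT Ht XX D).
destruct (HB t Ht) as [_ hd].
pose proof (XX t Ht) as hx. unfold af. unfold Xf in *.
set (r := vel2 Rr t) in *. set (p := vel2 F t) in *. set (x := sub2 (Rr t) (F t)) in *.
assert (x = sub2 (Rr t) (F t)) by reflexivity.
clearbody r p x. subst x.
destruct r as [r1 r2]; destruct p as [p1 p2]; destruct (Rr t) as [R1 R2]; destruct (F t) as [F1 F2].
unfold dot2, det2, sub2, scal2 in *; cbn [fst snd] in *.
assert (xr : (r1 - p1) * (R1 - F1) + (r2 - p2) * (R2 - F2) = 0) by lra.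
apply v2ext; cbn [fst snd].
- assert (W : r1 - ((R1 - F1) * p1 + (R2 - F2) * p2) * (R1 - F1) =
    r1 * (1 - ((R1 - F1) * (R1 - F1) + (R2 - F2) * (R2 - F2)))
    - (R2 - F2) * (r1 * (F2 - R2) - r2 * (F1 - R1))
    + (R1 - F1) * ((r1 - p1) * (R1 - F1) + (r2 - p2) * (R2 - F2))) by ring.
  rewrite hx, hd, xr in W. lra.
- assert (W : r2 - ((R1 - F1) * p1 + (R2 - F2) * p2) * (R2 - F2) =
    r2 * (1 - ((R1 - F1) * (R1 - F1) + (R2 - F2) * (R2 - F2)))
    + (R1 - F1) * (r1 * (F2 - R2) - r2 * (F1 - R1))
    + (R2 - F2) * ((r1 - p1) * (R1 - F1) + (r2 - p2) * (R2 - F2))) by ring.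
  rewrite hx, hd, xr in W. lra.
Qed.

Lemma mink_nn a b g v w :
  mink (add3 g (add3 (scal3 a v) (scal3 b w))) (add3 g (add3 (scal3 a v) (scal3 b w))) =
  mink g g + a*a*mink v v + b*b*mink w w + 2*a*mink g v + 2*b*mink g w + 2*a*b*mink v w.
Proof. unfold mink, add3, scal3, c1, c2, c3; cbn [fst snd]; ring. Qed.
Lemma mink_nz a b g v w z :
  mink (add3 g (add3 (scal3 a v) (scal3 b w))) z = mink g z + a * mink v z + b * mink w z.
Proof. unfold mink, add3, scal3, c1, c2, c3; cbn [fst snd]; ring. Qed.

Lemma nvec_props T G a b : 0 < T -> C2_curve3 G -> H2_arclength G T -> forall t, 0 <= t <= T ->
  mink (nvec G a b t) (nvec G a b t) = -1 + a*a + b*b /\ mink (nvec G a b t) (G t) = -1 /\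
  mink (nvec G a b t) (vel3 G t) = a /\ mink (nvec G a b t) (normal3 G t) = b.
Proof.
intros HT HC HA t Ht.
destruct (G_frame T G HT HC HA t Ht) as [Hf _].
pose proof (frameNN _ _ Hf) as NN. destruct Hf as [h1 [h2 h3]].
unfold nvec, normal3 in *.
set (N := lcross (G t) (vel3 G t)) in *.
assert (gN : mink (G t) N = 0) by apply trip1.
assert (Ng : mink N (G t) = 0) by (rewrite mink_sym; apply trip1).
assert (vN : mink (vel3 G t) N = 0) by apply trip2.
assert (Nv : mink N (vel3 G t) = 0) by (rewrite mink_sym; apply trip2).
assert (vg : mink (vel3 G t) (G t) = 0) by (rewrite mink_sym; auto).
rewrite mink_nn, !mink_nz.
rewrite ?gN, ?Ng, ?vN, ?Nv, ?vg, ?h1, ?h2, ?h3, ?NN.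
repeat split; ring.
Qed.


Lemma n_deriv T F G Rr : 0 < T -> smooth_curve2 F -> arclength2 F T ->
  C2_curve3 G -> H2_arclength G T -> (forall t, 0 <= t <= T -> geod_curv G t = curv2 F t) ->
  bicycle_path F 1 T Rr -> forall t, 0 <= t <= T ->
  D3 (nf G Rr F) t (scal3 (af Rr F t) (nf G Rr F t)).
Proof.
intros HT HS HAF HC HA Hk HB t Ht.
destruct (G_D G HC t) as [dG dV].
pose proof (D3_lcross _ _ _ _ _ dG dV) as dN.
destruct (F_D F HS t) as [dF dp].
pose proof (Rr_D Rr (proj1 HB) t) as dR.
pose proof (D2_sub _ _ _ _ _ dR dF) as dX.
pose proof (D_dot _ _ _ _ _ dX dp) as da.
pose proof (D_dot _ _ _ _ _ dX (D2_J _ _ _ dp)) as db.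
pose proof (D3_add _ _ _ _ _ dG (D3_add _ _ _ _ _ (D3_scal _ _ _ _ _ da dV) (D3_scal _ _ _ _ _ db dN))) as D.
eapply D3_eq; [exact D|].
rewrite (G_N T G HT HC HA t Ht), (G_acc T G HT HC HA t Ht), (Hk t Ht).
destruct (F_facts T F HT HS HAF t Ht) as [pp hq]. rewrite hq.
destruct (bike_facts T F Rr HT HS HB t Ht) as [_ hr]. rewrite hr.
rewrite dot_sub_l, pp.
unfold nf, nvec, af, bf, normal3. unfold Xf.
set (k := curv2 F t). clearbody k.
unfold dot2, sub2, scal2, J2, add3, scal3, lcross, c1, c2, c3; cbn [fst snd].
apply v3ext; unfold c1, c2, c3; cbn [fst snd]; ring.
Qed.

Lemma ab_unit T F Rr : 0 < T -> smooth_curve2 F -> arclength2 F T -> bicycle_path F 1 T Rr ->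
  forall t, 0 <= t <= T -> af Rr F t * af Rr F t + bf Rr F t * bf Rr F t = 1.
Proof.
intros HT HS HAF HB t Ht.
destruct (bike_facts T F Rr HT HS HB t Ht) as [xx _].
pose proof (HAF t Ht) as pp.
unfold af, bf in *. set (x := Xf Rr F t) in *. set (p := vel2 F t) in *. clearbody x p.
destruct x as [x1 x2]; destruct p as [p1 p2]; unfold dot2, J2 in *; cbn [fst snd] in *.
assert (W : (x1 * p1 + x2 * p2) * (x1 * p1 + x2 * p2) + (x1 * - p2 + x2 * p1) * (x1 * - p2 + x2 * p1)
  = (x1 * x1 + x2 * x2) * (p1 * p1 + p2 * p2)) by ring.
rewrite xx, pp in W. lra.
Qed.

Lemma nf_pos T F G Rr : 0 < T -> smooth_curve2 F -> arclength2 F T ->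
  C2_curve3 G -> H2_arclength G T -> bicycle_path F 1 T Rr -> forall t, 0 <= t <= T ->
  0 < c3 (nf G Rr F t).
Proof.
intros HT HS HAF HC HA HB t Ht.
destruct (nvec_props T G (af Rr F t) (bf Rr F t) HT HC HA t Ht) as [h1 [h2 _]].
apply (null_future _ (G t)); [| exact h2 | exact (proj1 (HA t Ht))].
unfold nf. rewrite h1.
pose proof (ab_unit T F Rr HT HS HAF HB t Ht). lra.
Qed.

Lemma n_invariant T F G Rr : 0 < T -> smooth_curve2 F -> arclength2 F T ->
  C2_curve3 G -> H2_arclength G T -> (forall t, 0 <= t <= T -> geod_curv G t = curv2 F t) ->
  bicycle_path F 1 T Rr ->
  0 < c3 (nf G Rr F 0) /\ 0 < c3 (nf G Rr F T) /\
  nf G Rr F T = scal3 (c3 (nf G Rr F T) / c3 (nf G Rr F 0)) (nf G Rr F 0).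
Proof.
intros HT HS HAF HC HA Hk HB.
assert (P := nf_pos T F G Rr HT HS HAF HC HA HB).
assert (D := n_deriv T F G Rr HT HS HAF HC HA Hk HB).
assert (M1 : c1 (nf G Rr F T) / c3 (nf G Rr F T) = c1 (nf G Rr F 0) / c3 (nf G Rr F 0)).
{ apply (const_on (fun s => c1 (nf G Rr F s) / c3 (nf G Rr F s)) T HT).
  intros s Hs. destruct (D s Hs) as [d1 [d2 d3]].
  pose proof (P s Hs).
  eapply deq; [apply (is_derive_div _ _ _ _ _ d1 d3); lra|].
  unfold scal3, c1, c2, c3 in *; cbn [fst snd] in *. field. lra. }
assert (M2 : c2 (nf G Rr F T) / c3 (nf G Rr F T) = c2 (nf G Rr F 0) / c3 (nf G Rr F 0)).
{ apply (const_on (fun s => c2 (nf G Rr F s) / c3 (nf G Rr F s)) T HT).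
  intros s Hs. destruct (D s Hs) as [d1 [d2 d3]].
  pose proof (P s Hs).
  eapply deq; [apply (is_derive_div _ _ _ _ _ d2 d3); lra|].
  unfold scal3, c1, c2, c3 in *; cbn [fst snd] in *. field. lra. }
assert (P0 := P 0 ltac:(lra)). assert (PT := P T ltac:(lra)).
split; [auto|split; [auto|]].
set (a := nf G Rr F T) in *. set (b := nf G Rr F 0) in *. clearbody a b.
destruct a as [[a1 a2] a3]; destruct b as [[b1 b2] b3].
unfold scal3, c1, c2, c3 in *; cbn [fst snd] in *.
apply v3ext; unfold c1, c2, c3; cbn [fst snd].
- transitivity (a1 / a3 * a3); [field; lra|]. rewrite M1. field; lra.
- transitivity (a2 / a3 * a3); [field; lra|]. rewrite M2. field; lra.
- field. lra.
Qed.


Definition hp (u : R) := Rmax 0 u * Rmax 0 u.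

Lemma hp_bound u h : Rabs (hp (u + h) - hp u - 2 * Rmax 0 u * h) <= h * h.
Proof.
unfold hp, Rmax.
destruct (Rle_dec 0 (u+h)); destruct (Rle_dec 0 u).
- rewrite Rabs_right; nra.
- rewrite Rabs_right; nra.
- rewrite Rabs_right; nra.
- rewrite Rabs_right; nra.
Qed.

Lemma hp_deriv u : is_derive hp u (2 * Rmax 0 u).
Proof.
apply is_derive_Reals. intros eps Heps. exists (mkposreal eps Heps). intros h Hh Hha. simpl in Hha.
pose proof (hp_bound u h) as B.
replace ((hp (u + h) - hp u) / h - 2 * Rmax 0 u) with ((hp (u + h) - hp u - 2 * Rmax 0 u * h) / h) by (field; auto).
unfold Rdiv. rewrite Rabs_mult, Rabs_inv.
apply (Rmult_lt_reg_r (Rabs h)). apply Rabs_pos_lt; auto.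
rewrite Rmult_assoc, Rinv_l by (apply Rabs_no_R0; auto). rewrite Rmult_1_r.
assert (h * h = Rabs h * Rabs h) by (rewrite <- Rabs_mult; rewrite Rabs_right; nra).
assert (0 < Rabs h) by (apply Rabs_pos_lt; auto).
nra.
Qed.

Lemma Rmax0_neg u : u <= 0 -> Rmax 0 u = 0.
Proof. intros; apply Rmax_left; lra. Qed.

Lemma dcomp (f g : R -> R) x df dg : is_derive f (g x) df -> is_derive g x dg ->
  is_derive (fun s => f (g s)) x (dg * df).
Proof. intros; now apply (is_derive_comp f g). Qed.

Definition Dn (G : R -> vec3) n0 s := - mink n0 (G s).
Definition Pn (G : R -> vec3) n0 s := mink n0 (vel3 G s).
Definition Qn (G : R -> vec3) n0 s := mink n0 (lcross (G s) (vel3 G s)).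
Definition hT T s := hp (- s) + hp (s - T).
Definition sgn T G n0 s := Dn G n0 s / (Dn G n0 s * Dn G n0 s + hT T s).
Definition Y0 (F : R -> vec2) G n0 s :=
  add2 (scal2 (Pn G n0 s) (vel2 F s)) (scal2 (Qn G n0 s) (J2 (vel2 F s))).
Definition Rb T F G n0 s := add2 (F s) (scal2 (sgn T G n0 s) (Y0 F G n0 s)).

Lemma mink_0l z : mink ((0,0),0) z = 0.
Proof. unfold mink, c1, c2, c3; cbn [fst snd]; ring. Qed.

Lemma dD G n0 s : C2_curve3 G -> is_derive (Dn G n0) s (- Pn G n0 s).
Proof.
intros HC. destruct (G_D G HC s) as [dG _].
pose proof (dopp _ _ _ (D_mink _ _ _ _ _ (D3_const n0 s) dG)) as D.
eapply deq; [exact D|]. rewrite mink_0l. unfold Pn. ring.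
Qed.
Lemma dP G n0 s : C2_curve3 G -> is_derive (Pn G n0) s (mink n0 (acc3 G s)).
Proof.
intros HC. destruct (G_D G HC s) as [_ dV].
pose proof (D_mink _ _ _ _ _ (D3_const n0 s) dV) as D.
eapply deq; [exact D|]. rewrite mink_0l. ring.
Qed.
Lemma dQ G n0 s : C2_curve3 G -> is_derive (Qn G n0) s
  (mink n0 (add3 (lcross (vel3 G s) (vel3 G s)) (lcross (G s) (acc3 G s)))).
Proof.
intros HC. destruct (G_D G HC s) as [dG dV].
pose proof (D_mink _ _ _ _ _ (D3_const n0 s) (D3_lcross _ _ _ _ _ dG dV)) as D.
eapply deq; [exact D|]. rewrite mink_0l. ring.
Qed.
Lemma dh T s : is_derive (hT T) s (- (2 * Rmax 0 (- s)) + 2 * Rmax 0 (s - T)).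
Proof.
unfold hT. apply dplus.
- eapply deq; [apply (dcomp hp (fun s => - s)); [apply hp_deriv | apply dopp; apply (is_derive_id s)]|].
  change (@one R_AbsRing) with 1. ring.
- eapply deq; [apply (dcomp hp (fun s => s - T)); [apply hp_deriv | apply dminus; [apply (is_derive_id s)| apply dconst]]|].
  change (@one R_AbsRing) with 1. ring.
Qed.

Lemma hT_pos T s : 0 < T -> (s < 0 \/ T < s) -> 0 < hT T s.
Proof.
intros HT [H|H]; unfold hT, hp.
- rewrite (Rmax_right 0 (-s)) by lra. assert (0 <= Rmax 0 (s - T) * Rmax 0 (s - T)) by nra. nra.
- rewrite (Rmax_right 0 (s - T)) by lra. assert (0 <= Rmax 0 (-s) * Rmax 0 (-s)) by nra. nra.
Qed.
Lemma hT_zero T s : 0 <= s <= T -> hT T s = 0 /\ - (2 * Rmax 0 (- s)) + 2 * Rmax 0 (s - T) = 0.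
Proof.
intros Hs; unfold hT, hp. rewrite !Rmax0_neg by lra. split; ring.
Qed.

Lemma den_ne T G n0 s : 0 < T -> (forall s, 0 <= s <= T -> 0 < Dn G n0 s) ->
  Dn G n0 s * Dn G n0 s + hT T s <> 0.
Proof.
intros HT HD.
destruct (Rlt_le_dec s 0) as [H1|H1].
- pose proof (hT_pos T s HT (or_introl H1)). assert (0 <= Dn G n0 s * Dn G n0 s) by nra. lra.
- destruct (Rlt_le_dec T s) as [H2|H2].
  + pose proof (hT_pos T s HT (or_intror H2)). assert (0 <= Dn G n0 s * Dn G n0 s) by nra. lra.
  + pose proof (HD s (conj H1 H2)). destruct (hT_zero T s (conj H1 H2)) as [-> _]. nra.
Qed.

Lemma dsg T G n0 s : 0 < T -> C2_curve3 G -> (forall s, 0 <= s <= T -> 0 < Dn G n0 s) ->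
  exists l, is_derive (sgn T G n0) s l.
Proof.
intros HT HC HD. eexists.
apply (is_derive_div (Dn G n0) (fun s => Dn G n0 s * Dn G n0 s + hT T s)).
- apply dD; auto.
- apply dplus; [apply dmult; apply dD; auto | apply dh].
- apply den_ne; auto.
Qed.

Lemma dsg_in T G n0 s : 0 < T -> C2_curve3 G -> (forall s, 0 <= s <= T -> 0 < Dn G n0 s) ->
  0 <= s <= T -> is_derive (sgn T G n0) s (Pn G n0 s / (Dn G n0 s * Dn G n0 s)).
Proof.
intros HT HC HD Hs.
eapply deq.
{ apply (is_derive_div (Dn G n0) (fun s => Dn G n0 s * Dn G n0 s + hT T s)).
- apply dD; auto.
- apply dplus; [apply dmult; apply dD; auto | apply dh].
- apply den_ne; auto. }
destruct (hT_zero T s Hs) as [h1 h2]. rewrite h1, h2.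
pose proof (HD s Hs). field. lra.
Qed.

Lemma Rb_C1 T F G n0 : 0 < T -> smooth_curve2 F -> C2_curve3 G -> (forall s, 0 <= s <= T -> 0 < Dn G n0 s) ->
  C1_curve2 (Rb T F G n0).
Proof.
intros HT HS HC HD.
assert (forall s, exists w, D2 (Rb T F G n0) s w).
{ intros s. destruct (dsg T G n0 s HT HC HD) as [l dl].
  destruct (F_D F HS s) as [dF dp].
  pose proof (D2_add _ _ _ _ _ dF (D2_scal _ _ _ _ _ dl (D2_add _ _ _ _ _
     (D2_scal _ _ _ _ _ (dP G n0 s HC) dp) (D2_scal _ _ _ _ _ (dQ G n0 s HC) (D2_J _ _ _ dp))))) as R.
  eexists. exact R. }
split; intros s; destruct (H s) as [w [h1 h2]]; eexists; eauto.
Qed.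

Lemma mink_self_frame g v w : frame g v ->
  mink w w = - (mink w g * mink w g) + mink w v * mink w v + mink w (lcross g v) * mink w (lcross g v).
Proof.
intros Hf. pose proof (decomp g v w Hf) as E.
transitivity (mink w (add3 (scal3 (- mink w g) g) (add3 (scal3 (mink w v) v) (scal3 (mink w (lcross g v)) (lcross g v))))).
{ rewrite <- E. reflexivity. }
set (a := mink w g). set (b := mink w v). set (c := mink w (lcross g v)).
assert (a = mink w g) by reflexivity. assert (b = mink w v) by reflexivity. assert (c = mink w (lcross g v)) by reflexivity.
clearbody a b c. subst a b c.
unfold mink, add3, scal3, c1, c2, c3; cbn [fst snd]; ring.
Qed.

Lemma mink_r_al z p c q : mink z (add3 p (scal3 c q)) = mink z p + c * mink z q.
Proof. unfold mink, add3, scal3, c1, c2, c3; cbn [fst snd]; ring. Qed.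
Lemma mink_r_s z c q : mink z (scal3 c q) = c * mink z q.
Proof. unfold mink, scal3, c1, c2, c3; cbn [fst snd]; ring. Qed.

Lemma Rb_bike T F G n0 : 0 < T -> smooth_curve2 F -> arclength2 F T -> C2_curve3 G -> H2_arclength G T ->
  (forall t, 0 <= t <= T -> geod_curv G t = curv2 F t) ->
  (forall s, 0 <= s <= T -> 0 < Dn G n0 s) -> mink n0 n0 = 0 ->
  forall s, 0 <= s <= T ->
  dot2 (sub2 (F s) (Rb T F G n0 s)) (sub2 (F s) (Rb T F G n0 s)) = 1 ^ 2 /\
  det2 (vel2 (Rb T F G n0) s) (sub2 (F s) (Rb T F G n0 s)) = 0.
Proof.
intros HT HS HAF HC HA Hk HD Hn s Hs.
destruct (F_D F HS s) as [dF dp].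
pose proof (D2_add _ _ _ _ _ dF (D2_scal _ _ _ _ _ (dsg_in T G n0 s HT HC HD Hs) (D2_add _ _ _ _ _
     (D2_scal _ _ _ _ _ (dP G n0 s HC) dp) (D2_scal _ _ _ _ _ (dQ G n0 s HC) (D2_J _ _ _ dp))))) as R.
match type of R with D2 _ _ ?w => assert (V : vel2 (Rb T F G n0) s = w) end.
{ destruct R as [r1 r2]. apply v2ext; cbn [fst snd]; apply is_derive_unique; [exact r1 | exact r2]. }
rewrite V. clear V R.
rewrite (G_N T G HT HC HA s Hs), (G_acc T G HT HC HA s Hs), (Hk s Hs).
destruct (F_facts T F HT HS HAF s Hs) as [pp hq]. rewrite hq.
rewrite mink_r_al, mink_r_s.
pose proof (mink_self_frame _ _ n0 (proj1 (G_frame T G HT HC HA s Hs))) as NN.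
pose proof (HD s Hs) as Dp.
unfold Rb, sgn, Y0, Dn, Pn, Qn, normal3 in *.
destruct (hT_zero T s Hs) as [h0 _]. rewrite h0.
set (m := mink n0 (G s)) in *. set (P := mink n0 (vel3 G s)) in *.
set (Q := mink n0 (lcross (G s) (vel3 G s))) in *.
set (k := curv2 F s). set (p := vel2 F s) in *. set (f := F s).
clearbody m P Q k p f. destruct p as [p1 p2]. destruct f as [f1 f2].
unfold dot2, det2, sub2, add2, scal2, J2 in *; cbn [fst snd] in *.
split.
- rewrite Hn in NN.
  assert (W : (f1 - (f1 + - m / (- m * - m + 0) * (P * p1 + Q * - p2))) *
    (f1 - (f1 + - m / (- m * - m + 0) * (P * p1 + Q * - p2))) +
    (f2 - (f2 + - m / (- m * - m + 0) * (P * p2 + Q * p1))) *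
    (f2 - (f2 + - m / (- m * - m + 0) * (P * p2 + Q * p1))) = (P * P + Q * Q) * (p1 * p1 + p2 * p2) / (m * m))
    by (field; lra).
  rewrite W, pp. replace (P * P + Q * Q) with (m * m) by lra. field. lra.
- field. lra.
Qed.

Lemma exist_path T F G : 0 < T -> smooth_curve2 F -> arclength2 F T -> C2_curve3 G -> H2_arclength G T ->
  (forall t, 0 <= t <= T -> geod_curv G t = curv2 F t) ->
  forall x, on_circle 1 x -> exists Rr, bicycle_path F 1 T Rr /\ sub2 (Rr 0) (F 0) = x.
Proof.
intros HT HS HAF HC HA Hk x Hx.
set (p0 := vel2 F 0). set (a0 := dot2 x p0). set (b0 := dot2 x (J2 p0)).
set (n0 := nvec G a0 b0 0).
assert (H0 : 0 <= 0 <= T) by lra.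
destruct (nvec_props T G a0 b0 HT HC HA 0 H0) as [e1 [e2 [e3 e4]]].
fold n0 in e1, e2, e3, e4.
pose proof (HAF 0 H0) as pp. fold p0 in pp.
assert (ab : a0 * a0 + b0 * b0 = 1).
{ unfold on_circle in Hx. unfold a0, b0. clearbody p0. destruct x as [x1 x2]; destruct p0 as [p1 p2].
  unfold dot2, J2 in *; cbn [fst snd] in *.
  assert (W : (x1 * p1 + x2 * p2) * (x1 * p1 + x2 * p2) + (x1 * - p2 + x2 * p1) * (x1 * - p2 + x2 * p1)
  = (x1 * x1 + x2 * x2) * (p1 * p1 + p2 * p2)) by ring.
  rewrite Hx, pp in W. lra. }
assert (Hn : mink n0 n0 = 0) by lra.
assert (Hc3 : 0 < c3 n0) by (apply (null_future _ (G 0)); auto; apply (HA 0 H0)).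
assert (HD : forall s, 0 <= s <= T -> 0 < Dn G n0 s).
{ intros s Hs. unfold Dn. pose proof (null_neg n0 (G s) Hn Hc3 (proj1 (HA s Hs))). lra. }
exists (Rb T F G n0). split.
- split; [apply Rb_C1; auto|]. intros s Hs.
  destruct (Rb_bike T F G n0 HT HS HAF HC HA Hk HD Hn s Hs); split; auto.
- unfold Rb, sgn, Y0, Dn, Pn, Qn. unfold normal3 in e4.
  rewrite e2, e3, e4. destruct (hT_zero T 0 H0) as [h0 _]. rewrite h0.
  fold p0. unfold a0, b0. clearbody p0. destruct x as [x1 x2]; destruct p0 as [p1 p2]. destruct (F 0) as [f1 f2].
  unfold dot2, sub2, add2, scal2, J2 in *; cbn [fst snd] in *.
  apply v2ext; cbn [fst snd].
  + assert (W : f1 + - -1 / (- -1 * - -1 + 0) * ((x1 * p1 + x2 * p2) * p1 + (x1 * - p2 + x2 * p1) * - p2) - f1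
      = x1 * (p1 * p1 + p2 * p2)) by (field; lra).
    rewrite W, pp; ring.
  + assert (W : f2 + - -1 / (- -1 * - -1 + 0) * ((x1 * p1 + x2 * p2) * p2 + (x1 * - p2 + x2 * p1) * p1) - f2
      = x2 * (p1 * p1 + p2 * p2)) by (field; lra).
    rewrite W, pp; ring.
Qed.


Lemma unit_decomp x p : dot2 p p = 1 -> x = add2 (scal2 (dot2 x p) p) (scal2 (dot2 x (J2 p)) (J2 p)).
Proof.
intros pp. destruct x as [x1 x2]; destruct p as [p1 p2]; unfold dot2, add2, scal2, J2 in *; cbn [fst snd] in *.
apply v2ext; cbn [fst snd].
- assert (W : (x1 * p1 + x2 * p2) * p1 + (x1 * - p2 + x2 * p1) * - p2 = x1 * (p1 * p1 + p2 * p2)) by ring.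
  rewrite W, pp; ring.
- assert (W : (x1 * p1 + x2 * p2) * p2 + (x1 * - p2 + x2 * p1) * p1 = x2 * (p1 * p1 + p2 * p2)) by ring.
  rewrite W, pp; ring.
Qed.

Lemma F_end T F : 0 < T -> arclength2 F T -> C1_closed2 F T -> vel2 F T = vel2 F 0.
Proof.
intros HT HA [_ [c [Hc E]]].
pose proof (HA T ltac:(lra)) as h1. pose proof (HA 0 ltac:(lra)) as h0.
rewrite E in h1. destruct (vel2 F 0) as [p1 p2]. unfold dot2, scal2 in *; cbn [fst snd] in *.
assert (c * c = 1).
{ assert (W : c * p1 * (c * p1) + c * p2 * (c * p2) = (c * c) * (p1 * p1 + p2 * p2)) by ring.
  rewrite W, h0 in h1. lra. }
assert (c = 1) by nra. subst c. rewrite E. unfold scal2; cbn [fst snd]. apply v2ext; cbn [fst snd]; ring.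
Qed.

Lemma X_decomp T F Rr t : arclength2 F T -> 0 <= t <= T ->
  Xf Rr F t = add2 (scal2 (af Rr F t) (vel2 F t)) (scal2 (bf Rr F t) (J2 (vel2 F t))).
Proof. intros HA Ht. unfold af, bf. apply unit_decomp. apply HA; auto. Qed.

Lemma mink_ss a b u w : mink (scal3 a u) (scal3 b w) = a * b * mink u w.
Proof. unfold mink, scal3, c1, c2, c3; cbn [fst snd]; ring. Qed.
Lemma mink_sl a u w : mink (scal3 a u) w = a * mink u w.
Proof. unfold mink, scal3, c1, c2, c3; cbn [fst snd]; ring. Qed.

Lemma closed_G_X T F G Rr : 0 < T -> smooth_curve2 F -> arclength2 F T -> C1_closed2 F T ->
  C2_curve3 G -> H2_arclength G T -> (forall t, 0 <= t <= T -> geod_curv G t = curv2 F t) ->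
  C1_closed3 G T -> bicycle_path F 1 T Rr -> Xf Rr F T = Xf Rr F 0.
Proof.
intros HT HS HAF HCF HC HA Hk [HG0 [c [Hc HV]]] HB.
assert (H0 : 0 <= 0 <= T) by lra. assert (H1 : 0 <= T <= T) by lra.
assert (HV1 : vel3 G T = vel3 G 0).
{ pose proof (proj2 (HA T H1)) as u1. pose proof (proj2 (HA 0 H0)) as u0.
  rewrite HV, mink_ss, u0 in u1. assert (c = 1) by nra. subst c. rewrite HV.
  destruct (vel3 G 0) as [[? ?] ?]. apply v3ext; unfold scal3, c1, c2, c3; cbn [fst snd]; ring. }
assert (HN1 : normal3 G T = normal3 G 0) by (unfold normal3; rewrite HV1, HG0; reflexivity).
destruct (n_invariant T F G Rr HT HS HAF HC HA Hk HB) as [P0 [PT E]].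
set (lam := c3 (nf G Rr F T) / c3 (nf G Rr F 0)) in E.
assert (Hl : 0 < lam) by (unfold lam; apply Rdiv_lt_0_compat; auto).
destruct (nvec_props T G (af Rr F T) (bf Rr F T) HT HC HA T H1) as [_ [gT [aT bT]]].
destruct (nvec_props T G (af Rr F 0) (bf Rr F 0) HT HC HA 0 H0) as [_ [g0 [a0 b0]]].
fold (nf G Rr F T) in gT, aT, bT. fold (nf G Rr F 0) in g0, a0, b0.
rewrite E, <- HG0, mink_sl, g0 in gT. assert (lam = 1) by lra.
rewrite H in E.
assert (E1 : nf G Rr F T = nf G Rr F 0).
{ rewrite E. destruct (nf G Rr F 0) as [[? ?] ?]. apply v3ext; unfold scal3, c1, c2, c3; cbn [fst snd]; ring. }
rewrite E1, HV1 in aT. rewrite E1, HN1 in bT.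
rewrite (X_decomp T F Rr T HAF H1), (X_decomp T F Rr 0 HAF H0).
rewrite (F_end T F HT HAF HCF). congruence.
Qed.

Lemma mink_nn2 a b a' b' g v w :
  mink (add3 g (add3 (scal3 a v) (scal3 b w))) (add3 g (add3 (scal3 a' v) (scal3 b' w))) =
  mink g g + a' * mink g v + b' * mink g w + a * mink v g + a * a' * mink v v + a * b' * mink v w
  + b * mink w g + b * a' * mink w v + b * b' * mink w w.
Proof. unfold mink, add3, scal3, c1, c2, c3; cbn [fst snd]; ring. Qed.

Lemma nvec_pair T G a b a' b' : 0 < T -> C2_curve3 G -> H2_arclength G T -> forall t, 0 <= t <= T ->
  mink (nvec G a b t) (nvec G a' b' t) = -1 + a * a' + b * b'.
Proof.
intros HT HC HA t Ht.
destruct (G_frame T G HT HC HA t Ht) as [Hf _].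
pose proof (frameNN _ _ Hf) as NN. destruct Hf as [h1 [h2 h3]].
unfold nvec, normal3 in *.
set (N := lcross (G t) (vel3 G t)) in *.
assert (gN : mink (G t) N = 0) by apply trip1.
assert (Ng : mink N (G t) = 0) by (rewrite mink_sym; apply trip1).
assert (vN : mink (vel3 G t) N = 0) by apply trip2.
assert (Nv : mink N (vel3 G t) = 0) by (rewrite mink_sym; apply trip2).
assert (vg : mink (vel3 G t) (G t) = 0) by (rewrite mink_sym; auto).
rewrite mink_nn2. rewrite ?gN, ?Ng, ?vN, ?Nv, ?vg, ?h1, ?h2, ?h3, ?NN. ring.
Qed.

Lemma lam_exists T F G : 0 < T -> smooth_curve2 F -> arclength2 F T -> C1_closed2 F T ->
  C2_curve3 G -> H2_arclength G T -> (forall t, 0 <= t <= T -> geod_curv G t = curv2 F t) ->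
  monodromy_is_id F 1 T ->
  forall al be, al * al + be * be = 1 ->
  exists lam, 0 < lam /\ nvec G al be T = scal3 lam (nvec G al be 0).
Proof.
intros HT HS HAF HCF HC HA Hk Hid al be Hab.
assert (H0 : 0 <= 0 <= T) by lra. assert (H1 : 0 <= T <= T) by lra.
set (p0 := vel2 F 0).
pose proof (HAF 0 H0) as pp. fold p0 in pp.
set (x := add2 (scal2 al p0) (scal2 be (J2 p0))).
assert (xa : dot2 x p0 = al /\ dot2 x (J2 p0) = be).
{ unfold x. clearbody p0. destruct p0 as [p1 p2]. unfold dot2, add2, scal2, J2 in *; cbn [fst snd] in *.
  split.
  - assert (W : (al * p1 + be * - p2) * p1 + (al * p2 + be * p1) * p2 = al * (p1 * p1 + p2 * p2)) by ring.
    rewrite W, pp; ring.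
  - assert (W : (al * p1 + be * - p2) * - p2 + (al * p2 + be * p1) * p1 = be * (p1 * p1 + p2 * p2)) by ring.
    rewrite W, pp; ring. }
assert (Hx : on_circle 1 x).
{ unfold on_circle. rewrite (unit_decomp x p0 pp) at 1 2. destruct xa as [-> ->].
  clearbody p0. destruct p0 as [p1 p2]. unfold dot2, add2, scal2, J2 in *; cbn [fst snd] in *.
  assert (W : (al * p1 + be * - p2) * (al * p1 + be * - p2) + (al * p2 + be * p1) * (al * p2 + be * p1)
    = (al * al + be * be) * (p1 * p1 + p2 * p2)) by ring.
  rewrite W, pp, Hab; ring. }
destruct (exist_path T F G HT HS HAF HC HA Hk x Hx) as [Rr [HB HX0]].
assert (HXT : Xf Rr F T = x).
{ apply (proj1 (Hid x (Xf Rr F T) Hx)). exists Rr. split; [auto|split; auto]. }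
assert (A0 : af Rr F 0 = al) by (unfold af; fold p0; unfold Xf; rewrite HX0; apply xa).
assert (B0 : bf Rr F 0 = be) by (unfold bf; fold p0; unfold Xf; rewrite HX0; apply xa).
assert (AT : af Rr F T = al) by (unfold af; rewrite HXT, (F_end T F HT HAF HCF); apply xa).
assert (BT : bf Rr F T = be) by (unfold bf; rewrite HXT, (F_end T F HT HAF HCF); apply xa).
destruct (n_invariant T F G Rr HT HS HAF HC HA Hk HB) as [P0 [PT E]].
set (lam := c3 (nf G Rr F T) / c3 (nf G Rr F 0)) in E.
assert (Hl : 0 < lam) by (unfold lam; apply Rdiv_lt_0_compat; auto).
clearbody lam. exists lam. split; [auto|].
unfold nf in E. rewrite A0, B0, AT, BT in E. exact E.
Qed.

Theorem corollary3p4 (T : R) (F : R -> vec2) (G : R -> vec3) :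
  0 < T ->
  smooth_curve2 F ->
  arclength2 F T ->
  C1_closed2 F T ->
  C2_curve3 G ->
  H2_arclength G T ->
  (forall t, 0 <= t <= T -> geod_curv G t = curv2 F t) ->
  (C1_closed3 G T <-> monodromy_is_id F 1 T).
Proof.
intros HT HS HAF HCF HC HA Hk. split.
- intros HG x y Hx. split.
  + intros [Rr [HB [h0 hT]]].
    pose proof (closed_G_X T F G Rr HT HS HAF HCF HC HA Hk HG HB) as E.
    unfold Xf in E. congruence.
  + intros ->. destruct (exist_path T F G HT HS HAF HC HA Hk x Hx) as [Rr [HB HX0]].
    exists Rr. split; [auto|split; auto].
    pose proof (closed_G_X T F G Rr HT HS HAF HCF HC HA Hk HG HB) as E.
    unfold Xf in E. congruence.
- intros Hid.
  assert (H0 : 0 <= 0 <= T) by lra. assert (H1 : 0 <= T <= T) by lra.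
  destruct (lam_exists T F G HT HS HAF HCF HC HA Hk Hid 1 0 ltac:(ring)) as [l1 [L1 E1]].
  destruct (lam_exists T F G HT HS HAF HCF HC HA Hk Hid (-1) 0 ltac:(ring)) as [l2 [L2 E2]].
  destruct (lam_exists T F G HT HS HAF HCF HC HA Hk Hid 0 1 ltac:(ring)) as [l3 [L3 E3]].
  assert (M12 : l1 * l2 = 1).
  { pose proof (nvec_pair T G 1 0 (-1) 0 HT HC HA T H1) as q.
    rewrite E1, E2, mink_ss, (nvec_pair T G 1 0 (-1) 0 HT HC HA 0 H0) in q. nra. }
  assert (M13 : l1 * l3 = 1).
  { pose proof (nvec_pair T G 1 0 0 1 HT HC HA T H1) as q.
    rewrite E1, E3, mink_ss, (nvec_pair T G 1 0 0 1 HT HC HA 0 H0) in q. nra. }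
  assert (M23 : l2 * l3 = 1).
  { pose proof (nvec_pair T G (-1) 0 0 1 HT HC HA T H1) as q.
    rewrite E2, E3, mink_ss, (nvec_pair T G (-1) 0 0 1 HT HC HA 0 H0) in q. nra. }
  assert (l1 = l2).
  { apply (Rmult_eq_reg_r l3); [lra | lra]. }
  subst l2. assert (l1 = 1) by nra. subst l1.
  unfold nvec, normal3 in E1, E2.
  split.
  + apply v3ext.
    * apply (f_equal c1) in E1. apply (f_equal c1) in E2.
      unfold add3, scal3, lcross, c1, c2, c3 in *; cbn [fst snd] in *. lra.
    * apply (f_equal c2) in E1. apply (f_equal c2) in E2.
      unfold add3, scal3, lcross, c1, c2, c3 in *; cbn [fst snd] in *. lra.
    * apply (f_equal c3) in E1. apply (f_equal c3) in E2.
      unfold add3, scal3, lcross, c1, c2, c3 in *; cbn [fst snd] in *. lra.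
  + exists 1. split; [lra|]. apply v3ext.
    * apply (f_equal c1) in E1. apply (f_equal c1) in E2.
      unfold add3, scal3, lcross, c1, c2, c3 in *; cbn [fst snd] in *. lra.
    * apply (f_equal c2) in E1. apply (f_equal c2) in E2.
      unfold add3, scal3, lcross, c1, c2, c3 in *; cbn [fst snd] in *. lra.
    * apply (f_equal c3) in E1. apply (f_equal c3) in E2.
      unfold add3, scal3, lcross, c1, c2, c3 in *; cbn [fst snd] in *. lra.
Qed.
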